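(* Let $L$ be the generator (domain $D(L)$) of a conservative Markov process with stationary distribution $\nu$, and $\mathcal{E}(f,g)=-\int Lf\cdot g\,d\nu$. Let $f,g\in D(L)$ satisfy $\mathcal{E}(f,f)\mathcal{E}(g,g)>0$ and $\check{\mathcal{E}}(f,g):=(\mathcal{E}(f,g)-\mathcal{E}(g,f))/2>0$. Put $\tilde{\mathcal{E}}(f,g)=(\mathcal{E}(f,g)+\mathcal{E}(g,f))/2$ and $\Delta(f,g)=\mathcal{E}(f,f)\mathcal{E}(g,g)-\tilde{\mathcal{E}}(f,g)^2$. Then $\Delta(f,g)\ge0$ and $$\mathrm{Sect}(\mathcal{E})^2-1\ge\begin{cases}\check{\mathcal{E}}(f,g)^2/\Delta(f,g)&\text{if }\mathcal{E}(f,f)\mathcal{E}(g,g)\ne\mathcal{E}(f,g)\tilde{\mathcal{E}}(f,g)\text{ and }\Delta(f,g)>0,\\ \infty&\text{if }\mathcal{E}(f,f)\mathcal{E}(g,g)\ne\mathcal{E}(f,g)\tilde{\mathcal{E}}(f,g)\text{ and }\Delta(f,g)=0,\\ \check{\mathcal{E}}(f,g)/\tilde{\mathcal{E}}(f,g)&\text{if }\mathcal{E}(f,f)\mathcal{E}(g,g)=\mathcal{E}(f,g)\tilde{\mathcal{E}}(f,g).\end{cases}$$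
   Context: $\mathrm{Sect}(\mathcal{E})$ is the infimum of all finite $C$ such that $\mathcal{E}(f,g)\le C\mathcal{E}(f,f)^{1/2}\mathcal{E}(g,g)^{1/2}$ for all $f,g\in D(L)$, and $=\infty$ if no such $C$ exists. *)

(* Defs.v *)
From HB Require Import structures.
From mathcomp Require Import all_boot all_order all_algebra.
From mathcomp Require Import all_classical all_reals all_analysis.
Set Implicit Arguments. Unset Strict Implicit. Unset Printing Implicit Defensive.
Import Order.TTheory GRing.Theory Num.Theory.
Import numFieldNormedType.Exports.
Local Open Scope classical_set_scope.
Local Open Scope ring_scope.

Definition markov_semigroup (R : realType) (d : measure_display)
  (T : measurableType d) (nu : probability T R) (P : R -> R.-pker T ~> T) :=
  [/\ (forall x A, measurable A -> P 0 x A = \d_x A),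
      (forall s t, 0 <= s -> 0 <= t -> forall x A, measurable A ->
          P (s + t) x A = (\int[P s x]_y (P t y A)%E)%E) &
      (forall t, 0 <= t -> forall A, measurable A ->
          (\int[nu]_x (P t x A)%E)%E = nu A)].

Definition sgact (R : realType) (d : measure_display) (T : measurableType d)
  (P : R -> R.-pker T ~> T) (t : R) (f : T -> R) (x : T) : R :=
  fine (\int[P t x]_y (f y)%:E).

Definition L2 (R : realType) (d : measure_display) (T : measurableType d)
  (nu : probability T R) (f : T -> R) :=
  measurable_fun setT f /\ nu.-integrable setT (fun x => (f x ^+ 2)%:E).

Definition gen_conv (R : realType) (d : measure_display) (T : measurableType d)
  (nu : probability T R) (P : R -> R.-pker T ~> T) (f g : T -> R) :=
  (fun t : R => (\int[nu]_x
     ((((sgact P t f x - f x) / t - g x) ^+ 2)%:E))%E) @ 0^'+ --> 0%E.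

Definition is_generator (R : realType) (d : measure_display)
  (T : measurableType d) (nu : probability T R) (P : R -> R.-pker T ~> T)
  (D : set (T -> R)) (L : (T -> R) -> (T -> R)) :=
  (forall f, D f -> [/\ L2 nu f, L2 nu (L f) & gen_conv nu P f (L f)]) /\
  (forall f g, L2 nu f -> L2 nu g -> gen_conv nu P f g -> D f).

Definition Dform (R : realType) (d : measure_display) (T : measurableType d)
  (nu : probability T R) (L : (T -> R) -> (T -> R)) (f g : T -> R) : R :=
  - Rintegral nu setT (fun x => L f x * g x).

(* Sect(E) = inf of all finite C with E(f,g) <= C E(f,f)^(1/2) E(g,g)^(1/2)
   for all f,g in D(L); +oo if there is no such C. *)
Definition Sect (R : realType) (d : measure_display) (T : measurableType d)
  (nu : probability T R) (D : set (T -> R)) (L : (T -> R) -> (T -> R))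
  : \bar R :=
  ereal_inf (EFin @` [set C : R | forall f g, D f -> D g ->
     Dform nu L f g <= C * Num.sqrt (Dform nu L f f) * Num.sqrt (Dform nu L g g)]).

(* Main.v *)
Require Import Defs.
From HB Require Import structures.
From mathcomp Require Import all_boot all_order all_algebra.
From mathcomp Require Import all_classical all_reals all_analysis.
From mathcomp Require Import measurable_realfun ring lra.
Set Implicit Arguments. Unset Strict Implicit. Unset Printing Implicit Defensive.
Import Order.TTheory GRing.Theory Num.Theory.
Import numFieldNormedType.Exports.
Local Open Scope classical_set_scope.
Local Open Scope ring_scope.

Section stat.
Local Open Scope ereal_scope.
Context (R : realType) (d : measure_display) (T : measurableType d)
  (nu : probability T R) (k : R.-pker T ~> T).
Hypothesis hstat : forall A, measurable A -> \int[nu]_x (k x A) = nu A.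

Let stat_indic E (mE : measurable E) :
  \int[nu]_z (\1_E z)%:E = \int[nu]_y (\int[k y]_z (\1_E z)%:E).
Proof.
rewrite integral_indic// setIT.
rewrite [LHS](_ : _ = \int[nu]_x k x E); last by rewrite hstat.
by apply: eq_integral => y _; rewrite integral_indic// setIT.
Qed.

Import HBNNSimple.

Let stat_nnsfun (f : {nnsfun T >-> R}) :
  \int[nu]_z (f z)%:E = \int[nu]_y (\int[k y]_z (f z)%:E).
Proof.
under [in LHS]eq_integral do rewrite fimfunE -fsumEFin//.
rewrite ge0_integral_fsum//; last 2 first.
  - by move=> r; exact/measurable_EFinP/measurableT_comp.
  - by move=> r z _; rewrite EFinM nnfun_muleindic_ge0.
under [in RHS]eq_integral.
  move=> y _.
  under eq_integral.
    by move=> z _; rewrite fimfunE -fsumEFin//; over.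
  rewrite /= ge0_integral_fsum//; last 2 first.
    - by move=> r; exact/measurable_EFinP/measurableT_comp.
    - by move=> r z _; rewrite EFinM nnfun_muleindic_ge0.
  under eq_fsbigr.
    move=> r _.
    rewrite (integralZl_indic _ (fun r => f @^-1` [set r]))//; last first.
      by move=> r0; rewrite preimage_nnfun0.
    rewrite integral_indic// setIT.
    over.
  over.
rewrite /= ge0_integral_fsum//; last 2 first.
  - move=> r; apply: measurable_funeM.
    exact: (measurable_kernel k (f @^-1` [set r]) _).
  - move=> n y _.
    have := mulemu_ge0 (fun n => f @^-1` [set n]).
    by apply; exact: preimage_nnfun0.
apply: eq_fsbigr => r _.
rewrite (integralZl_indic _ (fun r => f @^-1` [set r]))//; last first.
  exact: preimage_nnfun0.
rewrite /= stat_indic//.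
have [r0|r0] := leP 0%R r.
  rewrite ge0_integralZl//.
    by congr (_ * _); apply: eq_integral => y _; rewrite integral_indic// setIT.
  exact: (measurable_kernel k (f @^-1` [set r]) _).
rewrite integral0_eq ?mule0.
  by rewrite integral0_eq// => y _; rewrite preimage_nnfun0// measure0 mule0.
by move=> y _; rewrite integral0_eq// => z _; rewrite preimage_nnfun0// indic0.
Qed.

Lemma stat_int f : (forall z, 0 <= f z) -> measurable_fun [set: T] f ->
  \int[nu]_z f z = \int[nu]_y (\int[k y]_z f z).
Proof.
move=> f0 mf.
pose f_ := nnsfun_approx measurableT mf.
transitivity (\int[nu]_z (lim ((f_ n z)%:E @[n --> \oo]))).
  by apply/eq_integral => z _; apply/esym/cvg_lim => //=; exact: cvg_nnsfun_approx.
rewrite monotone_convergence//; last 3 first.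
  by move=> n; exact/measurable_EFinP.
  by move=> n z _; rewrite lee_fin.
  by move=> z _ a b ab; rewrite lee_fin; exact/lefP/nd_nnsfun_approx.
rewrite (_ : (fun _ => _) =
    (fun n => \int[nu]_y (\int[k y]_z (f_ n z)%:E)))//; last first.
  by apply/funext => n; rewrite stat_nnsfun.
transitivity (\int[nu]_y lim ((\int[k y]_z (f_ n z)%:E) @[n --> \oo])).
  rewrite -monotone_convergence//; last 3 first.
  - move=> n; apply: measurable_fun_integral_kernel => //.
    + by move=> U mU; exact: (measurable_kernel k _ mU).
    + by move=> z; rewrite lee_fin.
    + exact/measurable_EFinP.
  - by move=> n y _; apply: integral_ge0 => // z _; rewrite lee_fin.
  - move=> y _ a b ab; apply: ge0_le_integral => //.
    + by move=> z _; rewrite lee_fin.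
    + exact/measurable_EFinP.
    + exact/measurable_EFinP.
    + by move=> z _; rewrite lee_fin; exact/lefP/nd_nnsfun_approx.
apply: eq_integral => y _; rewrite -monotone_convergence//; last 3 first.
  - by move=> n; exact/measurable_EFinP.
  - by move=> n z _; rewrite lee_fin.
  - by move=> z _ a b ab; rewrite lee_fin; exact/lefP/nd_nnsfun_approx.
by apply: eq_integral => z _; apply/cvg_lim => //; exact: cvg_nnsfun_approx.
Qed.

End stat.

Section gen.
Context (R : realType) (d : measure_display) (T : measurableType d).

Lemma int1 {mu : measure T R} : mu setT = 1%E -> mu.-integrable setT (fun _ => 1%:E).
Proof.
move=> h1; apply/integrableP; split; first exact: measurable_cst.
under eq_integral do rewrite abse1.
by rewrite (integral_cst mu measurableT (1%:E)) h1 mul1e ltry.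
Qed.

Lemma L2_L1 {mu : measure T R} (f : T -> R) : mu setT = 1%E -> measurable_fun setT f ->
  mu.-integrable setT (fun x => (f x ^+ 2)%:E) -> mu.-integrable setT (EFin \o f).
Proof.
move=> h1 mf intf2.
apply: (@le_integrable _ _ _ _ _ measurableT _ (fun x => ((1 + f x ^+ 2)%:E))).
- exact/measurable_EFinP.
- move=> x _ /=; rewrite lee_fin.
  rewrite (ger0_norm (_ : 0 <= 1 + f x ^+ 2)); last by rewrite addr_ge0 // sqr_ge0.
  rewrite -(ger0_norm (sqr_ge0 (f x))) normrX.
  have := normr_ge0 (f x); nra.
- under eq_fun do rewrite EFinD.
  apply: integrableD => //.
  exact: int1.
Qed.

Lemma jensen2 (mu : measure T R) (f : T -> R) : mu setT = 1%E -> measurable_fun setT f ->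
  ((fine (\int[mu]_x (f x)%:E) ^+ 2)%:E <= \int[mu]_x (f x ^+ 2)%:E)%E.
Proof.
move=> h1 mf.
have mf2 : measurable_fun setT (fun x => (f x ^+ 2)%:E).
  by apply/measurable_EFinP; exact: measurable_funX.
have [fin|inf] := ltP (\int[mu]_x (f x ^+ 2)%:E)%E +oo%E; last first.
  by rewrite (@le_trans _ _ +oo%E) ?leey.
have if2 : mu.-integrable setT (fun x => (f x ^+ 2)%:E).
  apply/integrableP; split => //.
  rewrite (_ : (fun x => (`|(f x ^+ 2)%:E|)%E) = (fun x => (f x ^+ 2)%:E)) //.
  by apply/funext => x; rewrite gee0_abs // lee_fin sqr_ge0.
have if1 := @L2_L1 mu f h1 mf if2.
set m := fine _.
have hm : (\int[mu]_x (f x)%:E)%E = m%:E.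
  by rewrite fineK //; exact: (integrable_fin_num measurableT if1).
have i2 : mu.-integrable setT (fun x => ((2 * m)%:E * (f x)%:E + (- m ^+ 2)%:E * 1%:E)%E).
  apply: integrableD => //; apply: integrableZl => //; exact: int1.
have -> : ((m ^+ 2)%:E = \int[mu]_x ((2 * m)%:E * (f x)%:E + (- m ^+ 2)%:E * 1%:E))%E.
  rewrite integralD //; last 2 first.
    by apply: integrableZl.
    by apply: integrableZl => //; exact: int1.
  rewrite integralZl // integralZl //; last exact: int1.
  rewrite (integral_cst mu measurableT (1%:E)) h1 hm -!EFinM -EFinD; congr EFin.
  by rewrite mulr1; ring.
apply: le_integral => // x _; rewrite mule1 -EFinM -EFinD lee_fin.
have := sqr_ge0 (f x - m); rewrite sqrrB; lra.
Qed.

Lemma meas_kint (k : R.-ker T ~> T) (f : T -> R) : measurable_fun setT f ->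
  measurable_fun setT (fun x => fine (\int[k x]_y (f y)%:E)).
Proof.
move=> mf.
have mfe : measurable_fun setT (EFin \o f) by exact/measurable_EFinP.
apply: measurableT_comp; first exact: (fine_measurable measurableT).
rewrite /=.
under eq_fun do rewrite integralE.
apply: emeasurable_funB.
- apply: measurable_fun_integral_kernel.
  + by move=> U mU; exact: (measurable_kernel k _ mU).
  + by move=> z; exact: funepos_ge0.
  + exact: measurable_funepos.
- apply: measurable_fun_integral_kernel.
  + by move=> U mU; exact: (measurable_kernel k _ mU).
  + by move=> z; exact: funeneg_ge0.
  + exact: measurable_funeneg.
Qed.

Lemma test t (P : R -> R.-pker T ~> T) x (f : T -> R) : measurable_fun setT f ->
  (P t x).-integrable setT (fun x => (f x ^+ 2)%:E) -> (P t x).-integrable setT (EFin \o f).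
Proof. move=> mf; apply: L2_L1 => //; exact: prob_kernel. Qed.
End gen.

Section main.
Context (R : realType) (d : measure_display) (T : measurableType d)
  (nu : probability T R) (P : R -> R.-pker T ~> T).
Hypothesis hstat : forall t, 0 <= t -> forall A, measurable A ->
  (\int[nu]_x (P t x A))%E = nu A.

Lemma nu1 : nu setT = 1%E. Proof. exact: probability_setT. Qed.

Lemma L2_int f : L2 nu f -> nu.-integrable setT (EFin \o f).
Proof. by case=> mf if2; apply: L2_L1 => //; exact: nu1. Qed.

Lemma ae_int t f : 0 <= t -> L2 nu f ->
  \forall x \ae nu, (P t x).-integrable setT (EFin \o f).
Proof.
move=> t0 [mf if2].
have if1 := L2_int (conj mf if2).
have mab : measurable_fun setT (fun y => (`|f y|)%:E).
  by apply/measurable_EFinP; exact: measurableT_comp.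
have hphi : nu.-integrable setT (fun x => \int[P t x]_y (`|f y|)%:E)%E.
  apply/integrableP; split.
    apply: measurable_fun_integral_kernel => //.
    by move=> U mU; exact: (measurable_kernel (P t) _ mU).
  rewrite (_ : (fun x => _) = (fun x => \int[P t x]_y (`|f y|)%:E)%E); last first.
    by apply/funext => x; rewrite gee0_abs //; apply: integral_ge0 => y _; rewrite lee_fin.
  rewrite -stat_int //; last by apply: hstat.
  move/integrableP : if1 => [_]; congr (_ < _)%E.
have := integrable_ae measurableT hphi.
apply: filterS => x /(_ I) fx.
apply/integrableP; split; first exact/measurable_EFinP.
rewrite (_ : (fun y => _) = (fun y => (`|f y|)%:E)); last first.
  by [].
by rewrite -ge0_fin_numE //; apply: integral_ge0 => y _; rewrite lee_fin.
Qed.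

Lemma sgact_lin t a b f g : 0 <= t -> L2 nu f -> L2 nu g ->
  \forall x \ae nu, sgact P t (fun y => a * f y + b * g y) x
     = a * sgact P t f x + b * sgact P t g x.
Proof.
move=> t0 Lf Lg.
have := ae_int t0 Lf; have := ae_int t0 Lg; apply: filterS2 => x ig iff.
rewrite /sgact.
have hf : (\int[P t x]_y (f y)%:E)%E = (fine (\int[P t x]_y (f y)%:E))%:E.
  by rewrite fineK //; exact: (integrable_fin_num measurableT iff).
have hg : (\int[P t x]_y (g y)%:E)%E = (fine (\int[P t x]_y (g y)%:E))%:E.
  by rewrite fineK //; exact: (integrable_fin_num measurableT ig).
under eq_integral do rewrite EFinD !EFinM.
rewrite integralD //; last 2 first.
  exact: integrableZl.
  exact: integrableZl.
by rewrite !integralZl // hf hg -!EFinM -EFinD.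
Qed.

Lemma sq_meas (f : T -> R) : measurable_fun setT f ->
  measurable_fun setT (fun x => (f x ^+ 2)%:E).
Proof. by move=> mf; apply/measurable_EFinP; exact: measurable_funX. Qed.

Lemma L2_lin a b f g : L2 nu f -> L2 nu g -> L2 nu (fun x => a * f x + b * g x).
Proof.
move=> [mf if2] [mg ig2]; split.
  by apply: measurable_funD; apply: measurable_funM => //; exact: measurable_cst.
apply: (@le_integrable _ _ _ _ _ measurableT _
  (fun x => ((2 * a ^+ 2)%:E * (f x ^+ 2)%:E + (2 * b ^+ 2)%:E * (g x ^+ 2)%:E)%E)).
- apply: sq_meas.
  by apply: measurable_funD; apply: measurable_funM => //; exact: measurable_cst.
- move=> x _; rewrite -!EFinM -EFinD !abse_EFin lee_fin.
  rewrite (ger0_norm (sqr_ge0 _)) ger0_norm; last first.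
    by have := sqr_ge0 a; have := sqr_ge0 b; have := sqr_ge0 (f x); have := sqr_ge0 (g x); nra.
  have := sqr_ge0 (a * f x - b * g x); nra.
- by apply: integrableD => //; apply: integrableZl.
Qed.

Lemma L2_prod f g : L2 nu f -> L2 nu g -> nu.-integrable setT (EFin \o (fun x => f x * g x)).
Proof.
move=> [mf if2] [mg ig2].
apply: (@le_integrable _ _ _ _ _ measurableT _
  (fun x => ((f x ^+ 2)%:E + (g x ^+ 2)%:E)%E)).
- by apply/measurable_EFinP; exact: measurable_funM.
- move=> x _; rewrite -EFinD !abse_EFin lee_fin.
  rewrite (ger0_norm (_ : 0 <= f x ^+ 2 + g x ^+ 2)); last by rewrite addr_ge0 // sqr_ge0.
  rewrite normrM.
  have h1 : `|f x| ^+ 2 = f x ^+ 2 by rewrite -normrX ger0_norm // sqr_ge0.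
  have h2 : `|g x| ^+ 2 = g x ^+ 2 by rewrite -normrX ger0_norm // sqr_ge0.
  rewrite -h1 -h2.
  have := sqr_ge0 (`|f x| - `|g x|); have := normr_ge0 (f x); have := normr_ge0 (g x); nra.
- exact: integrableD.
Qed.

Lemma sgact_meas t f : measurable_fun setT f -> measurable_fun setT (sgact P t f).
Proof. exact: meas_kint. Qed.

Lemma sgact_sq t f : 0 <= t -> L2 nu f ->
  (\int[nu]_x ((sgact P t f x) ^+ 2)%:E <= \int[nu]_x (f x ^+ 2)%:E)%E.
Proof.
move=> t0 [mf if2].
have -> : (\int[nu]_x (f x ^+ 2)%:E = \int[nu]_y \int[P t y]_z (f z ^+ 2)%:E)%E.
  apply: stat_int.
  - exact: hstat.
  - by move=> z; rewrite lee_fin sqr_ge0.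
  - exact: sq_meas.
apply: ge0_le_integral => //.
- by move=> x _; rewrite lee_fin sqr_ge0.
- exact: (sq_meas (sgact_meas t mf)).
- apply: measurable_fun_integral_kernel.
  + by move=> U mU; exact: (measurable_kernel (P t) _ mU).
  + by move=> z; rewrite lee_fin sqr_ge0.
  + exact: sq_meas.
- by move=> x _; apply: jensen2 => //; exact: prob_kernel.
Qed.

Lemma ge0_int3 (a b c : R) (F G K : T -> R) : 0 <= a -> 0 <= b -> 0 <= c ->
  (forall x, 0 <= F x) -> (forall x, 0 <= G x) -> (forall x, 0 <= K x) ->
  measurable_fun setT F -> measurable_fun setT G -> measurable_fun setT K ->
  (\int[nu]_x ((a * F x + b * G x + c * K x)%:E) =
   a%:E * \int[nu]_x (F x)%:E + b%:E * \int[nu]_x (G x)%:E + c%:E * \int[nu]_x (K x)%:E)%E.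
Proof.
move=> a0 b0 c0 F0 G0 K0 mF mG mK.
have mF' : measurable_fun setT (EFin \o F) by exact/measurable_EFinP.
have mG' : measurable_fun setT (EFin \o G) by exact/measurable_EFinP.
have mK' : measurable_fun setT (EFin \o K) by exact/measurable_EFinP.
under eq_integral => x _ do rewrite !EFinD !EFinM.
rewrite ge0_integralD //; last 4 first.
- by move=> x _; rewrite adde_ge0 // mule_ge0 // lee_fin.
- by apply: emeasurable_funD; apply: emeasurable_funM => //; exact: measurable_cst.
- by move=> x _; rewrite mule_ge0 // lee_fin.
- by apply: emeasurable_funM => //; exact: measurable_cst.
rewrite ge0_integralD //; last 4 first.
- by move=> x _; rewrite mule_ge0 // lee_fin.
- by apply: emeasurable_funM => //; exact: measurable_cst.
- by move=> x _; rewrite mule_ge0 // lee_fin.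
- by apply: emeasurable_funM => //; exact: measurable_cst.
rewrite !ge0_integralZl //; by move=> x _; rewrite lee_fin.
Qed.

Lemma key_ineq h l t lam : L2 nu h -> L2 nu l -> 0 < t -> 0 < lam ->
  ((Rintegral nu setT (fun x => l x * h x))%:E <=
   (lam / 2)%:E * (\int[nu]_x ((((sgact P t h x - h x) / t - l x) ^+ 2)%:E)) +
   (fine (\int[nu]_x (h x ^+ 2)%:E) / (2 * lam))%:E)%E.
Proof.
move=> Lh Ll t0 lam0.
have [mh ih2] := Lh; have [ml il2] := Ll.
set s := sgact P t h.
have ms : measurable_fun setT s := sgact_meas t mh.
set q := fun x => (s x - h x) / t.
have mq : measurable_fun setT q.
  apply: measurable_funM; last exact: measurable_cst.
  exact: measurable_funB.
have mql : measurable_fun setT (fun x => (q x - l x) ^+ 2).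
  by apply: measurable_funX; exact: measurable_funB.
change ((Rintegral nu setT (fun x => l x * h x))%:E <=
   (lam / 2)%:E * (\int[nu]_x (((q x - l x) ^+ 2)%:E)) +
   (fine (\int[nu]_x (h x ^+ 2)%:E) / (2 * lam))%:E)%E.
set H := fine (\int[nu]_x (h x ^+ 2)%:E).
have hH : (\int[nu]_x (h x ^+ 2)%:E)%E = H%:E.
  by rewrite fineK // (integrable_fin_num measurableT ih2).
have S0 : (0 <= \int[nu]_x (s x ^+ 2)%:E)%E.
  by apply: integral_ge0 => x _; rewrite lee_fin sqr_ge0.
have SH : (\int[nu]_x (s x ^+ 2)%:E <= H%:E)%E.
  by rewrite -hH; apply: sgact_sq => //; exact: ltW.
set S := fine (\int[nu]_x (s x ^+ 2)%:E).
have hS : (\int[nu]_x (s x ^+ 2)%:E)%E = S%:E.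
  rewrite fineK // ge0_fin_numE //; exact: (le_lt_trans SH (ltry _)).
have SHr : S <= H by rewrite -lee_fin -hS.
have : (0 <= \int[nu]_x ((q x - l x) ^+ 2)%:E)%E.
  by apply: integral_ge0 => x _; rewrite lee_fin sqr_ge0.
case E : (\int[nu]_x ((q x - l x) ^+ 2)%:E)%E => [Dr| |] // D0.
  2: by rewrite gt0_muley ?lte_fin ?divr_gt0 // addye // leey.
set I := Rintegral _ _ _.
have iI : nu.-integrable setT (EFin \o (fun x => l x * h x)) := L2_prod Ll Lh.
have hI : (\int[nu]_x ((l x * h x)%:E))%E = I%:E.
  by rewrite /I /Rintegral fineK // (integrable_fin_num measurableT iI).
pose u x := l x * h x + (2 * t)^-1 * h x ^+ 2.
pose r x := (lam / 2) * (q x - l x) ^+ 2 + (2 * lam)^-1 * h x ^+ 2 + (2 * t)^-1 * s x ^+ 2.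
have A : (\int[nu]_x (u x)%:E)%E = (I + (2 * t)^-1 * H)%:E.
  rewrite /u; under eq_integral => x _ do rewrite EFinD (EFinM (2 * t)^-1).
  rewrite integralD //; last exact: integrableZl.
  by rewrite integralZl // hI hH -EFinM -EFinD.
have B : (\int[nu]_x (r x)%:E)%E = ((lam / 2) * Dr + (2 * lam)^-1 * H + (2 * t)^-1 * S)%:E.
  rewrite /r ge0_int3 //.
  - by rewrite E hH hS -!EFinM -!EFinD.
  - by rewrite divr_ge0 // ltW.
  - by rewrite invr_ge0 mulr_ge0 // ltW.
  - by rewrite invr_ge0 mulr_ge0 // ltW.
  - by move=> x; rewrite sqr_ge0.
  - by move=> x; rewrite sqr_ge0.
  - by move=> x; rewrite sqr_ge0.
  - exact: measurable_funX.
  - exact: measurable_funX.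
have ur : forall x, u x <= r x.
  move=> x.
  have hq : q x * t = s x - h x by rewrite /q divfK // gt_eqF.
  have hs : s x = h x + q x * t by rewrite hq; ring.
  have e : r x - u x = (lam * (q x - l x) + h x) ^+ 2 / (2 * lam) + (q x * t) ^+ 2 / (2 * t).
    rewrite /r /u hs; field.
    by rewrite !gt_eqF.
  rewrite -subr_ge0 e; apply: addr_ge0; apply: divr_ge0; rewrite ?sqr_ge0 // mulr_ge0 // ltW //.
have C : (\int[nu]_x (u x)%:E <= \int[nu]_x (r x)%:E)%E.
  apply: le_integral => //.
  - rewrite /u; under eq_fun do rewrite EFinD (EFinM (2 * t)^-1).
    apply: integrableD => //; exact: integrableZl.
  - apply/integrableP; split.
      apply/measurable_EFinP; rewrite /r.
      apply: measurable_funD; first apply: measurable_funD.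
      + by apply: measurable_funM => //; exact: measurable_cst.
      + by apply: measurable_funM; [exact: measurable_cst|exact: measurable_funX].
      + by apply: measurable_funM; [exact: measurable_cst|exact: measurable_funX].
    rewrite (_ : (fun x => _) = (fun x => (r x)%:E)); first by rewrite B ltry.
    apply/funext => x; rewrite gee0_abs // lee_fin.
    rewrite /r; apply: addr_ge0; first apply: addr_ge0.
    + by apply: mulr_ge0; rewrite ?sqr_ge0 // divr_ge0 // ltW.
    + by apply: mulr_ge0; rewrite ?sqr_ge0 // invr_ge0 mulr_ge0 // ltW.
    + by apply: mulr_ge0; rewrite ?sqr_ge0 // invr_ge0 mulr_ge0 // ltW.
  - by move=> x _; rewrite lee_fin ur.
move: C; rewrite A B lee_fin => C.
rewrite -EFinM -EFinD lee_fin.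
have : (2 * t)^-1 * S <= (2 * t)^-1 * H.
  by rewrite ler_wpM2l // invr_ge0 mulr_ge0 // ltW.
rewrite mulrC [H / _]mulrC.
lra.
Qed.

Lemma Lh_h_le0 h l : L2 nu h -> L2 nu l -> gen_conv nu P h l ->
  Rintegral nu setT (fun x => l x * h x) <= 0.
Proof.
move=> Lh Ll gc.
set I := Rintegral _ _ _.
set H := fine (\int[nu]_x (h x ^+ 2)%:E).
have H0 : 0 <= H by apply: fine_ge0; apply: integral_ge0 => x _; rewrite lee_fin sqr_ge0.
have key : forall lam, 0 < lam -> I <= H / (2 * lam).
  move=> lam lam0.
  rewrite -lee_fin.
  have cv : (fun t => (lam / 2)%:E * (\int[nu]_x ((((sgact P t h x - h x) / t - l x) ^+ 2)%:E)) +
      (H / (2 * lam))%:E)%E @ 0^'+ --> ((lam / 2)%:E * 0 + (H / (2 * lam))%:E)%E.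
    apply: cvgeD => //.
    - by apply: cvgeZl => //; exact: gc.
    - exact: cvg_cst.
  rewrite mule0 add0e in cv.
  apply: (cvge_to_ge cv).
  near=> t.
  apply: key_ineq => //.
apply/ler_addgt0Pr => e e0; rewrite add0r.
have lam0 : 0 < (H + 1) / e by rewrite divr_gt0 // ltr_wpDl.
apply: (le_trans (key _ lam0)).
rewrite ler_pdivrMr; last by rewrite mulr_gt0 // divr_gt0 // ltr_wpDl.
rewrite mulrCA [e * _]mulrC divfK ?gt_eqF //.
lra.
Unshelve. all: by end_near.
Qed.

Lemma ge0_int2 (a b : R) (F G : T -> R) : 0 <= a -> 0 <= b ->
  (forall x, 0 <= F x) -> (forall x, 0 <= G x) ->
  measurable_fun setT F -> measurable_fun setT G ->
  (\int[nu]_x ((a * F x + b * G x)%:E) =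
   a%:E * \int[nu]_x (F x)%:E + b%:E * \int[nu]_x (G x)%:E)%E.
Proof.
move=> a0 b0 F0 G0 mF mG.
have mF' : measurable_fun setT (EFin \o F) by exact/measurable_EFinP.
have mG' : measurable_fun setT (EFin \o G) by exact/measurable_EFinP.
under eq_integral => x _ do rewrite !EFinD !EFinM.
rewrite ge0_integralD //; last 4 first.
- by move=> x _; rewrite mule_ge0 // lee_fin.
- by apply: emeasurable_funM => //; exact: measurable_cst.
- by move=> x _; rewrite mule_ge0 // lee_fin.
- by apply: emeasurable_funM => //; exact: measurable_cst.
rewrite !ge0_integralZl //; by move=> x _; rewrite lee_fin.
Qed.

Definition qt t (f : T -> R) x := (sgact P t f x - f x) / t.

Lemma qt_meas t f : measurable_fun setT f -> measurable_fun setT (qt t f).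
Proof.
move=> mf; apply: measurable_funM; last exact: measurable_cst.
by apply: measurable_funB => //; exact: sgact_meas.
Qed.

Lemma gen_conv_lin a b f g lf lg : L2 nu f -> L2 nu g -> L2 nu lf -> L2 nu lg ->
  gen_conv nu P f lf -> gen_conv nu P g lg ->
  gen_conv nu P (fun x => a * f x + b * g x) (fun x => a * lf x + b * lg x).
Proof.
move=> Lf Lg Llf Llg cf cg.
have [mf _] := Lf; have [mg _] := Lg; have [mlf _] := Llf; have [mlg _] := Llg.
have mh : measurable_fun setT (fun x => a * f x + b * g x).
  by apply: measurable_funD; apply: measurable_funM => //; exact: measurable_cst.
rewrite /gen_conv.
apply: (@squeeze_cvge _ _ _ _ (fun=> 0%E) _
  (fun t => (2 * a ^+ 2)%:E * \int[nu]_x ((((sgact P t f x - f x) / t - lf x) ^+ 2)%:E) +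
            (2 * b ^+ 2)%:E * \int[nu]_x ((((sgact P t g x - g x) / t - lg x) ^+ 2)%:E))%E).
- near=> t.
  have t0 : 0 < t by near: t; exact: nbhs_right_gt.
  apply/andP; split.
    by apply: integral_ge0 => x _; rewrite lee_fin sqr_ge0.
  rewrite -ge0_int2; last 6 first.
  + by rewrite mulr_ge0 // sqr_ge0.
  + by rewrite mulr_ge0 // sqr_ge0.
  + by move=> x; rewrite sqr_ge0.
  + by move=> x; rewrite sqr_ge0.
  + by apply: measurable_funX; apply: measurable_funB => //; exact: (qt_meas t mf).
  + by apply: measurable_funX; apply: measurable_funB => //; exact: (qt_meas t mg).
  apply: ae_ge0_le_integral => //.
  + by move=> x _; rewrite lee_fin sqr_ge0.
  + apply: sq_meas; apply: measurable_funB; first exact: (qt_meas t mh).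
    by apply: measurable_funD; apply: measurable_funM => //; exact: measurable_cst.
  + move=> x _; rewrite lee_fin; apply: addr_ge0; apply: mulr_ge0; rewrite ?sqr_ge0 //; apply: mulr_ge0; rewrite ?sqr_ge0 //.
  + apply/measurable_EFinP; apply: measurable_funD; apply: measurable_funM;
      (try exact: measurable_cst); apply: measurable_funX; apply: measurable_funB => //.
      exact: (qt_meas t mf).
    exact: (qt_meas t mg).
  + have := sgact_lin a b (ltW t0) Lf Lg.
    apply: filterS => x -> _; rewrite lee_fin.
    set u := (sgact P t f x - f x) / t - lf x.
    set v := (sgact P t g x - g x) / t - lg x.
    have -> : (a * sgact P t f x + b * sgact P t g x - (a * f x + b * g x)) / t -
        (a * lf x + b * lg x) = a * u + b * v.
      by rewrite /u /v; field; rewrite gt_eqF.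
    have := sqr_ge0 (a * u - b * v); nra.
- exact: cvg_cst.
- rewrite (_ : 0%E = (2 * a ^+ 2)%:E * 0 + (2 * b ^+ 2)%:E * 0)%E; last by rewrite !mule0 adde0.
  apply: cvgeD => //.
  + by apply: cvgeZl => //; exact: cf.
  + by apply: cvgeZl => //; exact: cg.
Unshelve. all: by end_near.
Qed.

Lemma gen_conv_uniq h l1 l2 k : L2 nu h -> L2 nu l1 -> L2 nu l2 -> L2 nu k ->
  gen_conv nu P h l1 -> gen_conv nu P h l2 ->
  Rintegral nu setT (fun x => l1 x * k x) = Rintegral nu setT (fun x => l2 x * k x).
Proof.
move=> Lh L1 L2' Lk c1 c2.
have [mh _] := Lh; have [ml1 _] := L1; have [ml2 _] := L2'; have [mk _] := Lk.
have mw : measurable_fun setT (fun x => ((l1 x - l2 x) ^+ 2)%:E).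
  by apply: sq_meas; exact: measurable_funB.
have W : (\int[nu]_x ((l1 x - l2 x) ^+ 2)%:E <= 0)%E.
  have cv : (fun t => 2%:E * \int[nu]_x ((((sgact P t h x - h x) / t - l1 x) ^+ 2)%:E) +
      2%:E * \int[nu]_x ((((sgact P t h x - h x) / t - l2 x) ^+ 2)%:E))%E @ 0^'+ -->
      (2%:E * 0 + 2%:E * 0)%E.
    apply: cvgeD => //.
    + by apply: cvgeZl => //; exact: c1.
    + by apply: cvgeZl => //; exact: c2.
  rewrite !mule0 adde0 in cv.
  apply: (cvge_to_ge cv).
  near=> t.
  have t0 : 0 < t by near: t; exact: nbhs_right_gt.
  rewrite -ge0_int2 //; last 4 first.
  + by move=> x; rewrite sqr_ge0.
  + by move=> x; rewrite sqr_ge0.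
  + by apply: measurable_funX; apply: measurable_funB => //; exact: (qt_meas t mh).
  + by apply: measurable_funX; apply: measurable_funB => //; exact: (qt_meas t mh).
  apply: ge0_le_integral => //.
  + by move=> x _; rewrite lee_fin sqr_ge0.
  + apply/measurable_EFinP; apply: measurable_funD; apply: measurable_funM;
      (try exact: measurable_cst); apply: measurable_funX; apply: measurable_funB => //;
      exact: (qt_meas t mh).
  + move=> x _; rewrite lee_fin.
    set q := (sgact P t h x - h x) / t.
    have := sqr_ge0 (q - l1 x + (q - l2 x)); nra.
have I0 : (\int[nu]_x `|((l1 x - l2 x) ^+ 2)%:E| = 0)%E.
  apply/eqP; rewrite eq_le; apply/andP; split.
    rewrite (_ : (fun x => _) = (fun x => ((l1 x - l2 x) ^+ 2)%:E)) //.
    by apply/funext => x; rewrite gee0_abs // lee_fin sqr_ge0.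
  by apply: integral_ge0 => x _.
have /(ae_eq_integral_abs nu measurableT mw) ae0 := I0.
rewrite /Rintegral; congr fine.
apply: ae_eq_integral => //.
- by apply/measurable_EFinP; exact: measurable_funM.
- by apply/measurable_EFinP; exact: measurable_funM.
- move: ae0; apply: filterS => x h0 _.
  have := h0 I; rewrite /cst => /(congr1 fine) /= /eqP.
  rewrite sqrf_eq0 subr_eq0 => /eqP ->; done.
Unshelve. all: by end_near.
Qed.

Lemma Rint_lin2 (a b : R) (F G : T -> R) :
  nu.-integrable setT (EFin \o F) -> nu.-integrable setT (EFin \o G) ->
  Rintegral nu setT (fun x => a * F x + b * G x) =
  a * Rintegral nu setT F + b * Rintegral nu setT G.
Proof.
move=> iF iG.
rewrite RintegralD //; last 2 first.
- by rewrite (_ : EFin \o _ = (fun x => a%:E * (F x)%:E)%E); [exact: integrableZl|apply/funext].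
- by rewrite (_ : EFin \o _ = (fun x => b%:E * (G x)%:E)%E); [exact: integrableZl|apply/funext].
by rewrite !RintegralZl.
Qed.

Lemma D_lin D L a b f g : is_generator nu P D L -> D f -> D g ->
  D (fun x => a * f x + b * g x).
Proof.
move=> [h1 h2] Df Dg.
have [Lf Llf cf] := h1 f Df; have [Lg Llg cg] := h1 g Dg.
apply: (h2 _ (fun x => a * L f x + b * L g x)).
- exact: L2_lin.
- exact: L2_lin.
- exact: gen_conv_lin.
Qed.

Lemma L_lin D L a b f g k : is_generator nu P D L -> D f -> D g -> L2 nu k ->
  Rintegral nu setT (fun x => L (fun y => a * f y + b * g y) x * k x) =
  a * Rintegral nu setT (fun x => L f x * k x) + b * Rintegral nu setT (fun x => L g x * k x).
Proof.
move=> hL Df Dg Lk.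
have [h1 h2] := hL.
have Dh := D_lin a b hL Df Dg.
have [Lf Llf cf] := h1 f Df; have [Lg Llg cg] := h1 g Dg.
have [Lh Llh ch] := h1 _ Dh.
rewrite (@gen_conv_uniq _ _ (fun x => a * L f x + b * L g x) k Lh Llh _ Lk ch).
- rewrite -Rint_lin2; last 2 first.
  + exact: L2_prod.
  + exact: L2_prod.
  by congr Rintegral; apply/funext => x; ring.
- exact: L2_lin.
- exact: gen_conv_lin.
Qed.

Lemma E_bil D L a b c e f g : is_generator nu P D L -> D f -> D g ->
  Dform nu L (fun x => a * f x + b * g x) (fun x => c * f x + e * g x) =
  a * c * Dform nu L f f + a * e * Dform nu L f g +
  b * c * Dform nu L g f + b * e * Dform nu L g g.
Proof.
move=> hL Df Dg.
have [h1 _] := hL.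
have [Lf Llf _] := h1 f Df; have [Lg Llg _] := h1 g Dg.
rewrite /Dform (L_lin a b hL Df Dg); last exact: L2_lin.
have -> : Rintegral nu setT (fun x => L f x * (c * f x + e * g x)) =
    c * Rintegral nu setT (fun x => L f x * f x) + e * Rintegral nu setT (fun x => L f x * g x).
  rewrite -Rint_lin2; [by congr Rintegral; apply/funext => x; ring|exact: L2_prod|exact: L2_prod].
have -> : Rintegral nu setT (fun x => L g x * (c * f x + e * g x)) =
    c * Rintegral nu setT (fun x => L g x * f x) + e * Rintegral nu setT (fun x => L g x * g x).
  rewrite -Rint_lin2; [by congr Rintegral; apply/funext => x; ring|exact: L2_prod|exact: L2_prod].
ring.
Qed.

Lemma E_pos D L h : is_generator nu P D L -> D h -> 0 <= Dform nu L h h.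
Proof.
move=> [h1 _] Dh; have [Lh Llh ch] := h1 h Dh.
by rewrite /Dform oppr_ge0; exact: Lh_h_le0.
Qed.

End main.


Unset Implicit Arguments.
Unset Strict Implicit.

Theorem proposition3p7 (R : realType) (d : measure_display)
  (T : measurableType d) (nu : probability T R) (P : R -> R.-pker T ~> T)
  (D : set (T -> R)) (L : (T -> R) -> (T -> R))
  (hP : markov_semigroup nu P) (hL : is_generator nu P D L)
  (f g : T -> R) (hf : D f) (hg : D g) :
  let E := Dform nu L in
  let Etil := (E f g + E g f) / 2 in
  let Echk := (E f g - E g f) / 2 in
  let Delta := E f f * E g g - Etil ^+ 2 in
  0 < E f f * E g g -> 0 < Echk ->
  0 <= Delta /\
  (E f f * E g g != E f g * Etil -> 0 < Delta ->
     ((Echk ^+ 2 / Delta)%:E <= Sect nu D L * Sect nu D L - 1)%E) /\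
  (E f f * E g g != E f g * Etil -> Delta = 0 -> Sect nu D L = +oo%E) /\
  (E f f * E g g = E f g * Etil ->
     ((Echk / Etil)%:E <= Sect nu D L * Sect nu D L - 1)%E).
Proof.
move=> E Etil Echk Delta.
rewrite {}/Delta {}/Echk {}/Etil.
move=> hFG ha.
have hst : forall t, 0 <= t -> forall A, measurable A ->
    (\int[nu]_x (P t x A))%E = nu A.
  by case: hP.
have bil := fun a b c e => E_bil hst a b c e hL hf hg.
have Dl := fun a b => D_lin hst a b hL hf hg.
set F := E f f in hFG bil *; set A := E f g in ha bil *; set B := E g f in ha bil *;
set G := E g g in hFG bil *.
have quad : forall x y, 0 <= x * x * F + x * y * A + y * x * B + y * y * G.
  by move=> x y; rewrite -bil; apply: (E_pos hst hL); exact: Dl.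
have F0 : 0 <= F by have := quad 1 0; rewrite !(mul0r, mulr0, addr0, mul1r) => ->.
have G0 : 0 <= G by have := quad 0 1; rewrite !(mul0r, mulr0, add0r, mul1r) => ->.
have Fp : 0 < F.
  by rewrite lt_neqAle F0 andbT; apply/eqP => F0'; move: hFG; rewrite -F0' mul0r ltxx.
have Gp : 0 < G.
  by rewrite lt_neqAle G0 andbT; apply/eqP => G0'; move: hFG; rewrite -G0' mulr0 ltxx.
set S := (A + B) / 2.
set a := (A - B) / 2.
have Dge : 0 <= F * G - S ^+ 2.
  have := quad S (- F).
  have -> : S * S * F + S * - F * A + - F * S * B + - F * - F * G = F * (F * G - S ^+ 2).
    by rewrite /S; field.
  by rewrite pmulr_rge0.
have Sect_low : forall s, 0 <= s ->
    (forall C, (forall u v, D u -> D v ->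
       E u v <= C * Num.sqrt (E u u) * Num.sqrt (E v v)) -> s <= C) ->
    ((s ^+ 2 - 1)%:E <= Sect nu D L * Sect nu D L - 1)%E.
  move=> s s0 hs.
  have lb : (s%:E <= Sect nu D L)%E.
    by apply/ereal_infP => _ [C hC <-]; rewrite lee_fin; exact: hs.
  move: lb; case: (Sect nu D L) => [r| |] //.
    rewrite lee_fin => sr; rewrite -EFinM -EFinB lee_fin; nra.
  by move=> _; rewrite mulyy; apply: leey.
have Gn : G != 0 by rewrite gt_eqF.
have eA : A = S + a by rewrite /S /a; field.
have eB : B = S - a by rewrite /S /a; field.
have bil2 : forall a b c e, Dform nu L (fun x => a * f x + b * g x) (fun x => c * f x + e * g x)
    = a * c * F + a * e * A + b * c * B + b * e * G by exact: bil.
have ha0 : 0 < a by [].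
clearbody F A B G S a.
have low : 0 < F * G - S ^+ 2 ->
    ((a ^+ 2 / (F * G - S ^+ 2))%:E <= Sect nu D L * Sect nu D L - 1)%E.
  move=> Dp.
  set K := 1 + a ^+ 2 / (F * G - S ^+ 2).
  have K0 : 0 < K by rewrite /K ltr_pwDl // divr_ge0 // ?sqr_ge0 // ltW.
  have -> : a ^+ 2 / (F * G - S ^+ 2) = Num.sqrt K ^+ 2 - 1.
    by rewrite sqr_sqrtr ?ltW // /K; ring.
  apply: Sect_low; first exact: sqrtr_ge0.
  move=> C hC.
  set y := a * G / (F * G - S ^+ 2).
  set b1 := 1 - y * S / G.
  have := hC _ _ (Dl y b1) (Dl 0 1).
  rewrite /E !bil2.
  have Dn : F * G - S ^+ 2 != 0 by rewrite gt_eqF.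
  have -> : y * 0 * F + y * 1 * A + b1 * 0 * B + b1 * 1 * G = G * K.
    by rewrite /b1 /y /K eA eB; field; rewrite Dn Gn.
  have -> : y * y * F + y * b1 * A + b1 * y * B + b1 * b1 * G = G * K.
    by rewrite /b1 /y /K eA eB; field; rewrite Dn Gn.
  have -> : 0 * 0 * F + 0 * 1 * A + 1 * 0 * B + 1 * 1 * G = G by ring.
  rewrite sqrtrM; last exact: ltW.
  set sg := Num.sqrt G; set sk := Num.sqrt K.
  have sgp : 0 < sg by rewrite sqrtr_gt0.
  have skp : 0 < sk by rewrite sqrtr_gt0.
  have eG : G = sg ^+ 2 by rewrite sqr_sqrtr ?ltW.
  have eK : K = sk ^+ 2 by rewrite sqr_sqrtr ?ltW.
  rewrite {1}eG {1}eK => hC'.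
  have hp : 0 < sg ^+ 2 * sk by rewrite mulr_gt0 // exprn_gt0.
  rewrite -(ler_pM2l hp); nra.
split; first exact: Dge.
split; first by move=> _; exact: low.
split.
  move=> _ D0.
  rewrite /Sect (_ : [set C | _] = set0) ?image_set0 ?ereal_inf0 //.
  apply/seteqP; split => // C /= hC.
  have := hC _ _ (Dl 1 (- (S / G))) (Dl 0 1).
  rewrite /E !bil2.
  have -> : 1 * 0 * F + 1 * 1 * A + - (S / G) * 0 * B + - (S / G) * 1 * G = a.
    by rewrite eA eB; field; rewrite Gn.
  have -> : 1 * 1 * F + 1 * - (S / G) * A + - (S / G) * 1 * B + - (S / G) * - (S / G) * G = 0.
    transitivity ((F * G - S ^+ 2) / G); last by rewrite D0 mul0r.
    by rewrite eA eB; field; rewrite Gn.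
  rewrite sqrtr0 mulr0 mul0r => ha'.
  by have := lt_le_trans ha0 ha'; rewrite ltxx.
move=> eq.
have eD : F * G - S ^+ 2 = a * S by rewrite eq eA; ring.
have Sp : 0 < S.
  rewrite lt_neqAle; apply/andP; split.
    by apply/eqP => S0; move: hFG; rewrite eq -S0 mulr0 ltxx.
  by have := Dge; rewrite eD pmulr_rge0.
have Dp : 0 < F * G - S ^+ 2 by rewrite eD mulr_gt0.
have := low Dp.
suff -> : a ^+ 2 / (F * G - S ^+ 2) = a / S by [].
rewrite eD; field.
by rewrite !gt_eqF.
Qed.
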